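(* Let $\Delta_{\mu,\nu}(x)=[\tilde{t}_{\mu,\nu}(x)]^2-\tilde{t}_{\mu-1,\nu-1}(x)\tilde{t}_{\mu+1,\nu+1}(x)$. Suppose that $\mu>-3$ and $|\nu|<\mu+3$. Then, for all $x>0$, $$0<\frac{2(\frac{1}{2}x)^{2\mu+2}}{(\mu+\nu+3)\big[\Gamma(\frac{\mu-\nu+3}{2})\Gamma(\frac{\mu+\nu+3}{2})\big]^2}\leq\Delta_{\mu,\nu}(x)\leq\frac{2[\tilde{t}_{\mu,\nu}(x)]^2}{\mu+\nu+3}.$$
   Context: For real $\mu,\nu$ the (normalized) modified Lommel function of the first kind is $$\tilde{t}_{\mu,\nu}(x)=\sum_{k=0}^\infty\frac{(\frac{1}{2}x)^{\mu+2k+1}}{\Gamma\big(k+\frac{\mu-\nu+3}{2}\big)\Gamma\big(k+\frac{\mu+\nu+3}{2}\big)},\quad x>0.$$ *)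

(* Defs.v *)
From Stdlib Require Import Reals Lra ZArith.
From Coquelicot Require Import Coquelicot.
Open Scope R_scope.

Definition Gamma (s : R) : R :=
  RInt_gen (fun t => Rpower t (s - 1) * exp (- t)) (at_right 0) (Rbar_locally p_infty).

(* Reciprocal Gamma 1/Gamma(s), an entire function, extended to all real s
   through the functional equation 1/Gamma(s) = s(s+1)...(s+n-1)/Gamma(s+n)
   with n = max(0, up(-s)), so that s + n > 0
   (so 1/Gamma vanishes at 0, -1, -2, ...). *)
Definition rgamma (s : R) : R :=
  let n := Z.to_nat (up (- s)) in
  (fix pr (k : nat) : R := match k with O => 1 | S k' => pr k' * (s + INR k') end) n
  / Gamma (s + INR n).

Definition ttilde (mu nu x : R) : R :=
  Series (fun k : nat =>
    Rpower (x / 2) (mu + 2 * INR k + 1)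
    * rgamma (INR k + (mu - nu + 3) / 2)
    * rgamma (INR k + (mu + nu + 3) / 2)).

Definition LommelDelta (mu nu x : R) : R :=
  (ttilde mu nu x) ^ 2 - ttilde (mu - 1) (nu - 1) x * ttilde (mu + 1) (nu + 1) x.

(* Main.v *)
Require Import Defs.
From Stdlib Require Import Reals Lra Lia Classical.
From Coquelicot Require Import Coquelicot.
Open Scope R_scope.

Lemma ball_R (x e y : R) : ball x e y <-> Rabs (y - x) < e.
Proof. reflexivity. Qed.

Lemma CL (f : R -> R) (L : R) :
  (forall u v, 0 < u -> u <= v -> ex_RInt f u v) ->
  (forall eps, 0 < eps -> exists d, 0 < d /\ exists V, forall u v, 0 < u < d -> V < v ->
      Rabs (RInt f u v - L) < eps) ->
  is_RInt_gen f (at_right 0) (Rbar_locally p_infty) L.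
Proof.
  intros Hex H P [eps Heps].
  destruct (H eps (cond_pos eps)) as [d [Hd [V HV]]].
  apply Filter_prod with (Q := fun u => 0 < u < d) (R := fun v => Rmax V d < v).
  - exists (mkposreal d Hd). intros u Hu Hu0. rewrite ball_R in Hu. simpl in Hu.
    rewrite Rminus_0_r in Hu. apply Rabs_def2 in Hu. lra.
  - exists (Rmax V d). auto.
  - intros u v Hu Hv. simpl. exists (RInt f u v). split.
    + pose proof (Rmax_r V d). exact (RInt_correct f u v (Hex u v ltac:(lra) ltac:(lra))).
    + apply Heps. rewrite ball_R. apply HV; auto. pose proof (Rmax_l V d). lra.
Qed.

Lemma CL' (f : R -> R) (L : R) :
  is_RInt_gen f (at_right 0) (Rbar_locally p_infty) L ->
  (forall eps, 0 < eps -> exists d, 0 < d /\ exists V, forall u v, 0 < u < d -> V < v ->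
      Rabs (RInt f u v - L) < eps).
Proof.
  intros H eps Heps.
  destruct (H (ball L (mkposreal eps Heps))) as [Q R0 HQ HR HP].
  - exists (mkposreal eps Heps). auto.
  - destruct HQ as [d Hd]. destruct HR as [M HM].
    exists d. split. apply cond_pos. exists M. intros u v Hu Hv.
    destruct (HP u v) as [y [Hy1 Hy2]].
    + apply Hd. rewrite ball_R. rewrite Rminus_0_r, Rabs_right; lra. lra.
    + apply HM; auto.
    + simpl in Hy1. rewrite (is_RInt_unique _ _ _ _ Hy1). exact Hy2.
Qed.

Definition gf (s t : R) := Rpower t (s - 1) * exp (- t).

Lemma Rpower_derive (r t : R) : 0 < t -> is_derive (fun x => Rpower x r) t (r * Rpower t (r - 1)).
Proof. intros Ht. apply is_derive_Reals. now apply derivable_pt_lim_power. Qed.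

Lemma Rpower_cont (r t : R) : 0 < t -> continuous (fun x => Rpower x r) t.
Proof. intros Ht. apply (ex_derive_continuous (K:=R_AbsRing) (V:=R_NormedModule)). eexists. now apply Rpower_derive. Qed.

Lemma expm_cont (c t : R) : continuous (fun x => exp (c * x)) t.
Proof. apply (ex_derive_continuous (K:=R_AbsRing) (V:=R_NormedModule)). auto_derive. auto. Qed.

Lemma gf_cont (s t : R) : 0 < t -> continuous (gf s) t.
Proof.
  intros Ht. unfold gf. apply (continuous_mult (fun x => Rpower x (s-1)) (fun x => exp (-x))).
  - now apply Rpower_cont.
  - apply (continuous_ext (fun x => exp (-1 * x))). intros; f_equal; ring. apply expm_cont.
Qed.

Lemma gf_pos (s t : R) : 0 < gf s t.
Proof. unfold gf, Rpower. apply Rmult_lt_0_compat; apply exp_pos. Qed.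

Lemma gf_ex (s u v : R) : 0 < u -> u <= v -> ex_RInt (gf s) u v.
Proof.
  intros Hu Huv. apply (ex_RInt_continuous (V:=R_CompleteNormedModule)). intros z Hz.
  apply gf_cont. rewrite Rmin_left in Hz; lra.
Qed.

Lemma ln_le_m1 (y : R) : 0 < y -> ln y <= y - 1.
Proof.
  intros Hy. pose proof (exp_ineq1_le (ln y)). rewrite exp_ln in H; lra.
Qed.

Lemma exp_le_exp (x y : R) : x <= y -> exp x <= exp y.
Proof. intros [H|H]. left; now apply exp_increasing. right; now subst. Qed.

Definition Cb (r : R) := exp ((Rabs r + 1) * (ln (2 * (Rabs r + 1)) - 1)).

Lemma big_bound (r t : R) : 1 <= t -> Rpower t r * exp (- t) <= Cb r * exp (- t / 2).
Proof.
  intros Ht. unfold Rpower, Cb. rewrite <- !exp_plus.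
  apply exp_le_exp.
  set (m := Rabs r + 1).
  assert (Hm : 1 <= m) by (unfold m; pose proof (Rabs_pos r); lra).
  assert (Hl : 0 <= ln t) by (rewrite <- ln_1; apply ln_le; lra).
  assert (H1 : r * ln t <= m * ln t).
  { apply Rmult_le_compat_r; auto. pose proof (Rle_abs r). unfold m; lra. }
  assert (H2 : ln t = ln (2 * m) + ln (t / (2 * m))).
  { rewrite <- ln_mult; [| lra | apply Rdiv_lt_0_compat; lra]. f_equal. field. lra. }
  pose proof (ln_le_m1 (t / (2 * m)) ltac:(apply Rdiv_lt_0_compat; lra)).
  assert (H3 : m * ln (t / (2*m)) <= m * (t / (2*m) - 1)) by (apply Rmult_le_compat_l; lra).
  replace (m * (t / (2*m) - 1)) with (t/2 - m) in H3 by (field; lra).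
  rewrite H2 in H1 at 2. rewrite Rmult_plus_distr_l in H1.
  replace (m * (ln (2 * m) - 1)) with (m * ln (2*m) - m) by ring.
  
  lra.
Qed.

Lemma B1 (s u : R) : 0 < s -> 0 < u <= 1 -> RInt (gf s) u 1 <= 1 / s.
Proof.
  intros Hs Hu.
  assert (HI : is_RInt (fun x => Rpower x (s - 1)) u 1 (/ s * Rpower 1 s - / s * Rpower u s)).
  { apply (is_RInt_derive (V:=R_CompleteNormedModule) (fun x => / s * Rpower x s)).
    - intros x Hx. rewrite Rmin_left in Hx by lra.
      replace (Rpower x (s - 1)) with (/ s * (s * Rpower x (s - 1))) by (field; lra).
      apply is_derive_scal. apply Rpower_derive. lra.
    - intros x Hx. rewrite Rmin_left in Hx by lra. apply Rpower_cont. lra. }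
  assert (HR : is_RInt (gf s) u 1 (RInt (gf s) u 1)).
  { apply (RInt_correct (V:=R_CompleteNormedModule)). apply gf_ex; lra. }
  assert (Hle : RInt (gf s) u 1 <= / s * Rpower 1 s - / s * Rpower u s).
  { apply (is_RInt_le (gf s) (fun x => Rpower x (s-1)) u 1); auto. lra.
    intros x Hx. unfold gf.
    assert (0 < Rpower x (s - 1)) by (unfold Rpower; apply exp_pos).
    assert (exp (- x) <= 1). { rewrite <- exp_0. left. apply exp_increasing. lra. }
    nra. }
  assert (Rpower 1 s = 1) by (unfold Rpower; rewrite ln_1, Rmult_0_r; apply exp_0).
  assert (0 < Rpower u s) by (unfold Rpower; apply exp_pos).
  assert (0 < / s) by (apply Rinv_0_lt_compat; lra).
  unfold Rdiv. nra.
Qed.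

Lemma B2 (s v : R) : 1 <= v -> RInt (gf s) 1 v <= 2 * Cb (s - 1).
Proof.
  intros Hv. set (C := Cb (s - 1)).
  assert (HC : 0 < C) by (unfold C, Cb; apply exp_pos).
  assert (HI : is_RInt (fun x => C * exp (- x / 2)) 1 v
                 (-2 * C * exp (- v / 2) - (-2 * C * exp (- 1 / 2)))).
  { apply (is_RInt_derive (V:=R_CompleteNormedModule) (fun x => -2 * C * exp (- x / 2))).
    - intros x Hx. auto_derive. auto. assert (E1 : exp (- x * / 2) = exp (- x / 2)) by (f_equal; field). rewrite E1. field.
    - intros z Hz. apply (continuous_ext (fun y => C * exp ((-/2) * y))).
      intros y; replace (- y / 2) with (-/2 * y) by field; reflexivity.
      apply (continuous_mult (fun _ => C) (fun x => exp (-/2 * x))).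
      apply continuous_const. apply expm_cont. }
  assert (HR : is_RInt (gf s) 1 v (RInt (gf s) 1 v)).
  { apply (RInt_correct (V:=R_CompleteNormedModule)). apply gf_ex; lra. }
  assert (Hle : RInt (gf s) 1 v <= -2 * C * exp (- v / 2) - (-2 * C * exp (- 1 / 2))).
  { apply (is_RInt_le (gf s) (fun x => C * exp (- x / 2)) 1 v); auto.
    intros x Hx. unfold gf, C. apply big_bound. lra. }
  assert (exp (- 1 / 2) <= 1). { rewrite <- exp_0. left. apply exp_increasing. lra. }
  pose proof (exp_pos (- v / 2)). nra.
Qed.

Lemma RInt_mono_dom (s u v u' v' : R) : 0 < u' -> u' <= u -> u <= v -> v <= v' ->
  RInt (gf s) u v <= RInt (gf s) u' v'.
Proof.
  intros H1 H2 H3 H4.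
  rewrite <- (RInt_Chasles (V:=R_CompleteNormedModule) (gf s) u' u v') by (apply gf_ex; lra).
  rewrite <- (RInt_Chasles (V:=R_CompleteNormedModule) (gf s) u v v') by (apply gf_ex; lra).
  assert (0 <= RInt (gf s) u' u).
  { apply RInt_ge_0; auto. apply gf_ex; lra. intros; left; apply gf_pos. }
  assert (0 <= RInt (gf s) v v').
  { apply RInt_ge_0; auto. apply gf_ex; lra. intros; left; apply gf_pos. }
  simpl. unfold plus; simpl. lra.
Qed.

Lemma B3 (s u v : R) : 0 < s -> 0 < u <= v -> RInt (gf s) u v <= 1 / s + 2 * Cb (s - 1).
Proof.
  intros Hs Huv.
  assert (HM : RInt (gf s) u v <= RInt (gf s) (Rmin u 1) (Rmax v 1)).
  { apply RInt_mono_dom.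
    - apply Rmin_glb_lt; lra.
    - apply Rmin_l.
    - lra.
    - apply Rmax_l. }
  rewrite <- (RInt_Chasles (V:=R_CompleteNormedModule) (gf s) (Rmin u 1) 1 (Rmax v 1)) in HM.
  - pose proof (B1 s (Rmin u 1) Hs ltac:(split; [apply Rmin_glb_lt; lra | apply Rmin_r])).
    pose proof (B2 s (Rmax v 1) (Rmax_r _ _)). simpl in HM. unfold plus in HM; simpl in HM. lra.
  - apply gf_ex. apply Rmin_glb_lt; lra. apply Rmin_r.
  - apply gf_ex. lra. apply Rmax_r.
Qed.

Lemma Gamma_is (s : R) : 0 < s ->
  is_RInt_gen (gf s) (at_right 0) (Rbar_locally p_infty) (Gamma s) /\ 0 < Gamma s.
Proof.
  intros Hs.
  set (E := fun y => exists u v, 0 < u <= v /\ y = RInt (gf s) u v).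
  assert (HB : bound E).
  { exists (1 / s + 2 * Cb (s - 1)). intros y [u [v [Huv ->]]]. now apply B3. }
  assert (HE : exists y, E y) by (exists (RInt (gf s) 1 1); exists 1, 1; split; [lra|auto]).
  destruct (completeness E HB HE) as [L [HL1 HL2]].
  assert (Hgen : is_RInt_gen (gf s) (at_right 0) (Rbar_locally p_infty) L).
  { apply CL.
    - intros u v Hu Huv. now apply gf_ex.
    - intros eps Heps.
      destruct (classic (exists y, E y /\ L - eps < y)) as [[y [[u0 [v0 [Huv0 ->]]] Hy]] | Hn].
      + exists u0. split. lra. exists v0. intros u v Hu Hv.
        assert (H1 : RInt (gf s) u0 v0 <= RInt (gf s) u v) by (apply RInt_mono_dom; lra).
        assert (H2 : RInt (gf s) u v <= L) by (apply HL1; exists u, v; split; [lra|auto]).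
        apply Rabs_def1; lra.
      + exfalso. assert (L <= L - eps); [|lra].
        apply HL2. intros y Hy. apply Rnot_lt_le. intros Hlt. apply Hn. exists y; auto. }
  assert (HG : Gamma s = L).
  { apply (is_RInt_gen_unique (V:=R_CompleteNormedModule) (gf s) L Hgen). }
  split.
  - rewrite HG. exact Hgen.
  - rewrite HG. apply Rlt_le_trans with (RInt (gf s) 1 2).
    + apply RInt_gt_0. lra. intros; apply gf_pos. intros; apply gf_cont; lra.
    + apply HL1. exists 1, 2. split; [lra|auto].
Qed.

Definition Fa (s t : R) := Rpower t s * (- exp (- t)).

Lemma Fa_derive (s t : R) : 0 < t -> is_derive (Fa s) t (gf (s + 1) t - s * gf s t).
Proof.
  intros Ht. unfold Fa.
  assert (H1 := Rpower_derive s t Ht).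
  assert (H2 : is_derive (fun x => - exp (- x)) t (exp (- t))).
  { auto_derive. auto. ring. }
  assert (H3 := Derive.is_derive_mult _ _ _ _ _ H1 H2).
  replace (gf (s + 1) t - s * gf s t) with
    (s * Rpower t (s - 1) * - exp (- t) + Rpower t s * exp (- t)).
  exact H3.
  unfold gf. replace (s + 1 - 1) with s by ring. ring.
Qed.

Lemma RInt_rec (s u v : R) : 0 < u -> u <= v ->
  RInt (gf (s + 1)) u v = (Fa s v - Fa s u) + s * RInt (gf s) u v.
Proof.
  intros Hu Huv.
  assert (HI : is_RInt (fun t => gf (s + 1) t - s * gf s t) u v (Fa s v - Fa s u)).
  { apply (is_RInt_derive (V:=R_CompleteNormedModule) (Fa s)).
    - intros x Hx. rewrite Rmin_left in Hx by lra. apply Fa_derive. lra.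
    - intros x Hx. rewrite Rmin_left in Hx by lra.
      apply (continuous_minus (K:=R_AbsRing) (V:=R_NormedModule) (gf (s+1)) (fun t => scal s (gf s t))).
      apply gf_cont; lra.
      apply (continuous_scal_r (K:=R_AbsRing) (V:=R_NormedModule)). apply gf_cont; lra. }
  assert (HJ : is_RInt (gf s) u v (RInt (gf s) u v)).
  { apply (RInt_correct (V:=R_CompleteNormedModule)). apply gf_ex; lra. }
  assert (HK := is_RInt_plus _ _ _ _ _ _ HI (is_RInt_scal _ _ _ s _ HJ)).
  apply is_RInt_unique.
  apply (is_RInt_ext (V:=R_NormedModule)) with (2 := HK).
  intros x Hx. unfold plus, scal; simpl. unfold mult; simpl. ring.
Qed.

Lemma Fa_lim0 (s : R) : 0 < s -> forall eps, 0 < eps -> exists d, 0 < d /\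
  forall u, 0 < u < d -> Rabs (Fa s u) < eps.
Proof.
  intros Hs eps Heps. exists (exp (ln eps / s)). split. apply exp_pos.
  intros u Hu. unfold Fa. rewrite Rabs_mult, Rabs_Ropp, !Rabs_right.
  2: left; apply exp_pos. 2: left; unfold Rpower; apply exp_pos.
  assert (exp (- u) < 1) by (rewrite <- exp_0; apply exp_increasing; lra).
  assert (Rpower u s < eps).
  { unfold Rpower. rewrite <- (exp_ln eps) by auto. apply exp_increasing.
    assert (ln u < ln eps / s).
    { rewrite <- (ln_exp (ln eps / s)). apply ln_increasing; lra. }
    apply Rmult_lt_compat_l with (r := s) in H0; auto.
    replace (s * (ln eps / s)) with (ln eps) in H0 by (field; lra). lra. }
  assert (0 < Rpower u s) by (unfold Rpower; apply exp_pos).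
  pose proof (exp_pos (- u)). nra.
Qed.

Lemma Fa_liminf (s : R) : forall eps, 0 < eps -> exists V,
  forall v, V < v -> Rabs (Fa s v) < eps.
Proof.
  intros eps Heps. set (C := Cb s).
  assert (HC : 0 < C) by (unfold C, Cb; apply exp_pos).
  exists (Rmax 1 (-2 * ln (eps / C))). intros v Hv.
  pose proof (Rmax_l 1 (-2 * ln (eps / C))). pose proof (Rmax_r 1 (-2 * ln (eps / C))).
  unfold Fa. rewrite Rabs_mult, Rabs_Ropp, !Rabs_right.
  2: left; apply exp_pos. 2: left; unfold Rpower; apply exp_pos.
  apply Rle_lt_trans with (C * exp (- v / 2)). apply big_bound. lra.
  assert (exp (- v / 2) < eps / C).
  { rewrite <- (exp_ln (eps / C)) by (apply Rdiv_lt_0_compat; lra). apply exp_increasing. lra. }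
  apply Rmult_lt_compat_l with (r := C) in H1; auto.
  replace (C * (eps / C)) with eps in H1 by (field; lra). lra.
Qed.

Lemma Gamma_rec (s : R) : 0 < s -> Gamma (s + 1) = s * Gamma s.
Proof.
  intros Hs. destruct (Gamma_is s Hs) as [Hg Hpos].
  assert (Hgen : is_RInt_gen (gf (s + 1)) (at_right 0) (Rbar_locally p_infty) (s * Gamma s)).
  { apply CL.
    - intros u v Hu Huv. now apply gf_ex.
    - intros eps Heps.
      destruct (CL' _ _ Hg (eps / (3 * s)) ltac:(apply Rdiv_lt_0_compat; lra)) as [d1 [Hd1 [V1 HV1]]].
      destruct (Fa_lim0 s Hs (eps / 3) ltac:(lra)) as [d2 [Hd2 HF2]].
      destruct (Fa_liminf s (eps / 3) ltac:(lra)) as [V2 HF2'].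
      exists (Rmin d1 d2). split. apply Rmin_glb_lt; lra.
      exists (Rmax (Rmax V1 V2) (Rmin d1 d2)). intros u v Hu Hv.
      pose proof (Rmin_l d1 d2). pose proof (Rmin_r d1 d2).
      pose proof (Rmax_l (Rmax V1 V2) (Rmin d1 d2)). pose proof (Rmax_r (Rmax V1 V2) (Rmin d1 d2)).
      pose proof (Rmax_l V1 V2). pose proof (Rmax_r V1 V2).
      rewrite RInt_rec by lra.
      assert (A1 := HV1 u v ltac:(lra) ltac:(lra)).
      assert (A2 := HF2 u ltac:(lra)).
      assert (A3 := HF2' v ltac:(lra)).
      replace (Fa s v - Fa s u + s * RInt (gf s) u v - s * Gamma s)
        with (Fa s v - Fa s u + s * (RInt (gf s) u v - Gamma s)) by ring.
      assert (A4 : Rabs (s * (RInt (gf s) u v - Gamma s)) < eps / 3).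
      { rewrite Rabs_mult, Rabs_right by lra.
        apply Rmult_lt_compat_l with (r := s) in A1; auto.
        replace (s * (eps / (3 * s))) with (eps / 3) in A1 by (field; lra). lra. }
      pose proof (Rabs_triang (Fa s v - Fa s u) (s * (RInt (gf s) u v - Gamma s))).
      pose proof (Rabs_triang (Fa s v) (- Fa s u)). rewrite Rabs_Ropp in H6.
      replace (Fa s v + - Fa s u) with (Fa s v - Fa s u) in H6 by ring. lra. }
  apply (is_RInt_gen_unique (V:=R_CompleteNormedModule) (gf (s + 1)) _ Hgen).
Qed.

Lemma rgamma_pos_eq (s : R) : 0 < s -> rgamma s = / Gamma s.
Proof.
  intros Hs. unfold rgamma.
  assert (Hu : (up (- s) <= 0)%Z).
  { destruct (archimed (- s)) as [H1 H2].
    assert (IZR (up (- s)) < 1) by lra.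
    apply Z.lt_succ_r. apply lt_IZR. simpl. lra. }
  destruct (up (- s)) eqn:E; [| lia |]; simpl; rewrite Rplus_0_r; unfold Rdiv; ring.
Qed.

Lemma rgamma_small_eq (s : R) : -1 < s <= 0 -> rgamma s = s / Gamma (s + 1).
Proof.
  intros Hs. unfold rgamma.
  assert (Hu : up (- s) = 1%Z).
  { symmetry. apply (up_tech (- s) 0). simpl; lra. simpl; lra. }
  rewrite Hu. simpl. f_equal. ring.
Qed.

Lemma rgamma_rec (s : R) : -1 < s -> rgamma s = s * rgamma (s + 1).
Proof.
  intros Hs. destruct (Rlt_or_le 0 s) as [Hp | Hn].
  - rewrite !rgamma_pos_eq by lra. rewrite Gamma_rec by auto.
    destruct (Gamma_is s Hp) as [_ Hg]. field. split; lra.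
  - rewrite rgamma_small_eq by lra. rewrite rgamma_pos_eq by lra. unfold Rdiv. ring.
Qed.

Lemma rgamma_pos (s : R) : 0 < s -> 0 < rgamma s.
Proof.
  intros Hs. rewrite rgamma_pos_eq by auto. apply Rinv_0_lt_compat. apply Gamma_is; auto.
Qed.
Lemma sum_rev (f : nat -> R) (m : nat) :
  sum_f_R0 f m = sum_f_R0 (fun j => f (m - j)%nat) m.
Proof.
  revert f. induction m as [|m IH]; intros f.
  - simpl. reflexivity.
  - rewrite decomp_sum by lia. simpl pred. rewrite (IH (fun i => f (S i))).
    rewrite tech5. rewrite Nat.sub_diag.
    rewrite (sum_eq (fun j => f (S (m - j))) (fun j => f (S m - j)%nat)).
    + ring.
    + intros i Hi. f_equal. lia.
Qed.

Lemma sum_nonneg_le (f : nat -> R) (N : nat) :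
  (forall i, (i <= N)%nat -> 0 <= f i) -> 0 <= sum_f_R0 f N.
Proof.
  induction N as [|N IH]; intros H; simpl.
  - apply H; lia.
  - apply Rplus_le_le_0_compat. apply IH; intros; apply H; lia. apply H; lia.
Qed.

Lemma lim_ratio (a b z : R) : 0 < a -> 0 < b ->
  is_lim_seq (fun n => z / ((INR n + a) * (INR n + b))) 0.
Proof.
  intros Ha Hb.
  assert (H1 : forall c, is_lim_seq (fun n => INR n + c) p_infty).
  { intros c. eapply is_lim_seq_plus. apply is_lim_seq_INR. apply is_lim_seq_const. reflexivity. }
  assert (H2 : is_lim_seq (fun n => (INR n + a) * (INR n + b)) p_infty).
  { eapply is_lim_seq_mult. apply H1. apply H1. reflexivity. }
  assert (H3 := is_lim_seq_inv _ _ H2 ltac:(discriminate)).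
  assert (H4 := is_lim_seq_scal_l _ z _ H3).
  simpl in H4. rewrite Rmult_0_r in H4.
  eapply is_lim_seq_ext; [|exact H4]. intros n. simpl. unfold Rdiv. reflexivity.
Qed.

Lemma INR_pos (n : nat) : 0 <= INR n.
Proof. apply pos_INR. Qed.

Lemma conv_Q (a b z : R) (Q : nat -> R) : 0 < a -> 0 < b -> 0 < z ->
  (forall k, 0 < Q k) -> (forall k, Q (S k) = Q k * z / ((INR k + a) * (INR k + b))) ->
  ex_series (fun n => Rabs (Q n)).
Proof.
  intros Ha Hb Hz HQp HQ.
  apply ex_series_DAlembert with 0. lra.
  intros n. specialize (HQp n). lra.
  eapply is_lim_seq_ext; [|apply (lim_ratio a b z Ha Hb)].
  intros n. simpl. rewrite HQ. pose proof (HQp n). pose proof (INR_pos n).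
  rewrite Rabs_right. field. repeat split; lra.
  apply Rle_ge. apply Rmult_le_pos. apply Rmult_le_pos. apply Rmult_le_pos; lra.
  left; apply Rinv_0_lt_compat; apply Rmult_lt_0_compat; lra.
  left; apply Rinv_0_lt_compat; lra.
Qed.

Lemma conv_W (a b z : R) (Q : nat -> R) : 0 < a -> 0 < b -> 0 < z ->
  (forall k, 0 < Q k) -> (forall k, Q (S k) = Q k * z / ((INR k + a) * (INR k + b))) ->
  ex_series (fun n => Rabs ((INR n + b + 1) * Q n)).
Proof.
  intros Ha Hb Hz HQp HQ.
  apply ex_series_DAlembert with 0. lra.
  intros n. specialize (HQp n). pose proof (INR_pos n). nra.
  apply is_lim_seq_le_le with (u := fun _ => 0) (w := fun n => 2 * (z / ((INR n + a) * (INR n + b)))).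
  - intros n. rewrite S_INR, HQ. pose proof (HQp n). pose proof (INR_pos n).
    assert (E : (INR n + 1 + b + 1) * (Q n * z / ((INR n + a) * (INR n + b))) /
                ((INR n + b + 1) * Q n)
              = ((INR n + b + 2) / (INR n + b + 1)) * (z / ((INR n + a) * (INR n + b)))).
    { field. repeat split; lra. }
    rewrite E. clear E.
    assert (0 < z / ((INR n + a) * (INR n + b))).
    { apply Rdiv_lt_0_compat; auto. apply Rmult_lt_0_compat; lra. }
    assert (0 < (INR n + b + 2) / (INR n + b + 1)) by (apply Rdiv_lt_0_compat; lra).
    assert ((INR n + b + 2) / (INR n + b + 1) <= 2).
    { apply Rmult_le_reg_r with (INR n + b + 1). lra.
      unfold Rdiv. rewrite Rmult_assoc, Rinv_l by lra. lra. }
    rewrite Rabs_right by (apply Rle_ge; apply Rmult_le_pos; lra).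
    split. apply Rmult_le_pos; lra. apply Rmult_le_compat_r; lra.
  - apply is_lim_seq_const.
  - assert (H := is_lim_seq_scal_l _ 2 _ (lim_ratio a b z Ha Hb)).
    simpl in H. rewrite Rmult_0_r in H. exact H.
Qed.

Definition Wf (b : R) (p q : nat) := 1 - (INR p + b - 1) / (INR q + b).

Lemma pair1 (a b z : R) (Q : nat -> R) : 0 < a -> 0 < b -> 0 < z ->
  (forall k, 0 < Q k) -> (forall k, Q (S k) = Q k * z / ((INR k + a) * (INR k + b))) ->
  forall p q, 0 <= Q (S p) * Q q * Wf b (S p) q + Q (S q) * Q p * Wf b (S q) p.
Proof.
  intros Ha Hb Hz HQp HQ p q. unfold Wf. rewrite !HQ, !S_INR.
  pose proof (HQp p). pose proof (HQp q). pose proof (INR_pos p). pose proof (INR_pos q).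
  set (P := INR p) in *. set (R1 := INR q) in *.
  assert (E : Q p * z / ((P + a) * (P + b)) * Q q * (1 - (P + 1 + b - 1) / (R1 + b)) +
     Q q * z / ((R1 + a) * (R1 + b)) * Q p * (1 - (R1 + 1 + b - 1) / (P + b))
     = z * Q p * Q q * ((R1 - P) * (R1 - P)) / ((P + a) * (P + b) * (R1 + a) * (R1 + b))).
  { field. repeat split; lra. }
  rewrite E. apply Rmult_le_pos.
  - assert (0 <= (R1 - P) * (R1 - P)) by (pose proof (Rle_0_sqr (R1 - P)); unfold Rsqr in *; lra).
    assert (0 <= z * Q p * Q q) by (apply Rmult_le_pos; [apply Rmult_le_pos|]; lra).
    apply Rmult_le_pos; lra.
  - left. apply Rinv_0_lt_compat. repeat apply Rmult_lt_0_compat; lra.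
Qed.

Lemma pair2 (b : R) (Q : nat -> R) : 0 < b -> (forall k, 0 < Q k) ->
  forall p q, 0 <= Q p * Q q * (1 / b - Wf b p q) + Q q * Q p * (1 / b - Wf b q p).
Proof.
  intros Hb HQp p q. unfold Wf.
  pose proof (HQp p). pose proof (HQp q). pose proof (INR_pos p). pose proof (INR_pos q).
  set (P := INR p) in *. set (R1 := INR q) in *.
  assert (E : Q p * Q q * (1 / b - (1 - (P + b - 1) / (R1 + b))) +
              Q q * Q p * (1 / b - (1 - (R1 + b - 1) / (P + b)))
     = Q p * Q q * (2 * P * R1 + b * (P + R1) + b * ((P - R1) * (P - R1))) / (b * (P + b) * (R1 + b))).
  { field. repeat split; lra. }
  rewrite E. apply Rmult_le_pos.
  - apply Rmult_le_pos. apply Rmult_le_pos; lra.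
    assert (0 <= (P - R1) * (P - R1)) by (pose proof (Rle_0_sqr (P - R1)); unfold Rsqr in *; lra).
    assert (0 <= P * R1) by (apply Rmult_le_pos; lra).
    assert (0 <= b * (P + R1)) by (apply Rmult_le_pos; lra).
    assert (0 <= b * ((P - R1) * (P - R1))) by (apply Rmult_le_pos; lra). lra.
  - left. apply Rinv_0_lt_compat. repeat apply Rmult_lt_0_compat; lra.
Qed.

Definition Tf (b : R) (Q : nat -> R) (n k : nat) := Q k * Q (n - k)%nat * Wf b k (n - k).

Lemma lower_coef (a b z : R) (Q : nat -> R) : 0 < a -> 0 < b -> 0 < z ->
  (forall k, 0 < Q k) -> (forall k, Q (S k) = Q k * z / ((INR k + a) * (INR k + b))) ->
  forall n, 0 <= sum_f_R0 (Tf b Q n) n.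
Proof.
  intros Ha Hb Hz HQp HQ n.
  assert (H0 : forall q, 0 <= Q 0%nat * Q q * Wf b 0 q).
  { intros q. unfold Wf. simpl INR. pose proof (HQp 0%nat). pose proof (HQp q). pose proof (INR_pos q).
    replace (1 - (0 + b - 1) / (INR q + b)) with ((INR q + 1) / (INR q + b)) by (field; lra).
    apply Rmult_le_pos. apply Rmult_le_pos; lra. apply Rdiv_le_0_compat; lra. }
  destruct n as [|m].
  - simpl. unfold Tf. apply H0.
  - rewrite decomp_sum by lia. simpl pred.
    apply Rplus_le_le_0_compat. unfold Tf. rewrite Nat.sub_0_r. apply H0.
    assert (E : 2 * sum_f_R0 (fun i => Tf b Q (S m) (S i)) m =
      sum_f_R0 (fun j => Tf b Q (S m) (S j) + Tf b Q (S m) (S (m - j))) m).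
    { rewrite plus_sum. rewrite <- (sum_rev (fun i => Tf b Q (S m) (S i))). ring. }
    assert (0 <= sum_f_R0 (fun j => Tf b Q (S m) (S j) + Tf b Q (S m) (S (m - j))) m).
    { apply sum_nonneg_le. intros j Hj. unfold Tf.
      replace (S m - S j)%nat with (m - j)%nat by lia.
      replace (S m - S (m - j))%nat with j by lia.
      apply (pair1 a b z Q); auto. }
    lra.
Qed.

Lemma upper_coef (b : R) (Q : nat -> R) : 0 < b -> (forall k, 0 < Q k) ->
  forall n, sum_f_R0 (Tf b Q n) n <= sum_f_R0 (fun k => Q k * Q (n - k)%nat) n / b.
Proof.
  intros Hb HQp n.
  set (U := fun k => Q k * Q (n - k)%nat * (1 / b - Wf b k (n - k))).
  assert (E1 : sum_f_R0 (fun k => Q k * Q (n - k)%nat) n / b - sum_f_R0 (Tf b Q n) n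
               = sum_f_R0 U n).
  { unfold Rdiv.
    replace (sum_f_R0 (fun k => Q k * Q (n-k)%nat) n * / b) with
      (sum_f_R0 (fun k => Q k * Q (n-k)%nat * / b) n) by (rewrite <- scal_sum; ring).
    rewrite <- minus_sum. apply sum_eq.
    intros i Hi. unfold U, Tf. field. lra. }
  assert (E2 : 2 * sum_f_R0 U n = sum_f_R0 (fun k => U k + U (n - k)%nat) n).
  { rewrite plus_sum. rewrite <- (sum_rev U). ring. }
  assert (0 <= sum_f_R0 (fun k => U k + U (n - k)%nat) n).
  { apply sum_nonneg_le. intros k Hk. unfold U.
    replace (n - (n - k))%nat with k by lia. apply pair2; auto. }
  lra.
Qed.

Lemma core (a b z : R) (Q : nat -> R) : 0 < a -> 0 < b -> 0 < z ->
  (forall k, 0 < Q k) -> (forall k, Q (S k) = Q k * z / ((INR k + a) * (INR k + b))) ->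
  Q 0%nat ^ 2 / b <= Series Q * Series Q
     - Series (fun k => (INR k + b - 1) * Q k) * Series (fun k => Q k / (INR k + b))
  /\ Series Q * Series Q
     - Series (fun k => (INR k + b - 1) * Q k) * Series (fun k => Q k / (INR k + b))
     <= Series Q * Series Q / b.
Proof.
  intros Ha Hb Hz HQp HQ.
  set (be := fun k => (INR k + b - 1) * Q k).
  set (ga := fun k => Q k / (INR k + b)).
  assert (AQ := conv_Q a b z Q Ha Hb Hz HQp HQ).
  assert (AW := conv_W a b z Q Ha Hb Hz HQp HQ).
  assert (Abe : ex_series (fun n => Rabs (be n))).
  { apply (ex_series_le (K:=R_AbsRing) (V:=R_CompleteNormedModule)) with (2 := AW).
    intros n. change (norm (Rabs (be n))) with (Rabs (Rabs (be n))). rewrite Rabs_Rabsolu.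
    unfold be. pose proof (HQp n). pose proof (INR_pos n).
    rewrite !Rabs_mult. rewrite (Rabs_right (Q n)) by lra.
    rewrite (Rabs_right (INR n + b + 1)) by lra.
    apply Rmult_le_compat_r. lra. apply Rabs_le. lra. }
  assert (Aga : ex_series (fun n => Rabs (ga n))).
  { apply (ex_series_le (K:=R_AbsRing) (V:=R_CompleteNormedModule)) with
      (b := fun n => / b * Rabs (Q n)).
    intros n. change (norm (Rabs (ga n))) with (Rabs (Rabs (ga n))). rewrite Rabs_Rabsolu.
    unfold ga. pose proof (HQp n). pose proof (INR_pos n).
    rewrite Rabs_right. rewrite Rabs_right by lra.
    unfold Rdiv. rewrite Rmult_comm. apply Rmult_le_compat_r. lra.
    apply Rinv_le_contravar; lra.
    apply Rle_ge, Rdiv_le_0_compat; lra.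
    apply (ex_series_scal_l (K:=R_AbsRing) (V:=R_NormedModule)). exact AQ. }
  assert (HA := Series_correct _ (ex_series_Rabs _ AQ)).
  assert (HB := Series_correct _ (ex_series_Rabs _ Abe)).
  assert (HC := Series_correct _ (ex_series_Rabs _ Aga)).
  assert (M1 := is_series_mult _ _ _ _ HA HA AQ AQ).
  assert (M2 := is_series_mult _ _ _ _ HB HC Abe Aga).
  assert (Mc := is_series_minus _ _ _ _ M1 M2).
  set (c := fun n => sum_f_R0 (Tf b Q n) n).
  assert (Hc : is_series c (Series Q * Series Q - Series be * Series ga)).
  { eapply is_series_ext; [|exact Mc]. intros n. unfold c, plus, opp; simpl.
    rewrite <- Rminus_def, <- minus_sum. apply sum_eq. intros i Hi. unfold Tf, Wf, be, ga.
    pose proof (INR_pos (n - i)). field. lra. }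
  rewrite <- (is_series_unique _ _ Hc).
  assert (Ec : ex_series c) by (eexists; exact Hc).
  split.
  - rewrite Series_incr_1 by auto.
    assert (Hc0 : c 0%nat = Q 0%nat ^ 2 / b).
    { unfold c, Tf, Wf. simpl. field. lra. }
    rewrite Hc0.
    assert (0 <= Series (fun k => c (S k))).
    { replace 0 with (Series (fun k => 0 * c (S k))).
      apply Series_le. intros n. split. lra. rewrite Rmult_0_l.
      apply (lower_coef a b z Q); auto.
      apply ex_series_incr_1 in Ec. exact Ec.
      rewrite Series_scal_l. ring. }
    lra.
  - assert (HD : is_series (fun n => / b * sum_f_R0 (fun k => Q k * Q (n - k)%nat) n)
                   (/ b * (Series Q * Series Q))).
    { apply (is_series_scal_l (K:=R_AbsRing) (V:=R_NormedModule)). exact M1. }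
    replace (Series Q * Series Q / b) with (Series (fun n => / b * sum_f_R0 (fun k => Q k * Q (n - k)%nat) n)).
    apply Series_le.
    + intros n. split. apply (lower_coef a b z Q); auto.
      pose proof (upper_coef b Q Hb HQp n). unfold c. unfold Rdiv in H. lra.
    + eexists; exact HD.
    + rewrite (is_series_unique _ _ HD). unfold Rdiv. ring.
Qed.

Lemma Rpow_split (y c : R) (k : nat) : 0 < y -> Rpower y (c + 2 * INR k) = Rpower y c * (y ^ 2) ^ k.
Proof.
  intros Hy. rewrite Rpower_plus. f_equal.
  replace (2 * INR k) with (INR (2 * k)) by (rewrite mult_INR; simpl; ring).
  rewrite Rpower_pow by auto. apply pow_mult.
Qed.

Theorem theorem3p4 (mu nu x : R) :
  -3 < mu -> Rabs nu < mu + 3 -> 0 < x ->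
  0 < 2 * Rpower (x / 2) (2 * mu + 2)
        / ((mu + nu + 3) * (Gamma ((mu - nu + 3) / 2) * Gamma ((mu + nu + 3) / 2)) ^ 2)
  /\ 2 * Rpower (x / 2) (2 * mu + 2)
        / ((mu + nu + 3) * (Gamma ((mu - nu + 3) / 2) * Gamma ((mu + nu + 3) / 2)) ^ 2)
     <= LommelDelta mu nu x
  /\ LommelDelta mu nu x <= 2 * (ttilde mu nu x) ^ 2 / (mu + nu + 3).
Proof.
  intros Hmu Hnu Hx.
  destruct (Rabs_def2 _ _ Hnu) as [Hn1 Hn2].
  assert (Ha : 0 < (mu - nu + 3) / 2) by lra.
  assert (Hb : 0 < (mu + nu + 3) / 2) by lra.
  assert (Hy : 0 < x / 2) by lra.
  assert (Hz : 0 < (x / 2) ^ 2) by (apply pow_lt; auto).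
  set (a := (mu - nu + 3) / 2) in *.
  set (b := (mu + nu + 3) / 2) in *.
  set (y := x / 2) in *.
  set (z := y ^ 2) in *.
  set (Q := fun k => rgamma (INR k + a) * rgamma (INR k + b) * z ^ k).
  assert (HQp : forall k, 0 < Q k).
  { intros k. pose proof (INR_pos k). unfold Q.
    apply Rmult_lt_0_compat. apply Rmult_lt_0_compat; apply rgamma_pos; lra.
    apply pow_lt; auto. }
  assert (HQ : forall k, Q (S k) = Q k * z / ((INR k + a) * (INR k + b))).
  { intros k. pose proof (INR_pos k). unfold Q. rewrite S_INR.
    assert (E1 : rgamma (INR k + 1 + a) = rgamma (INR k + a) / (INR k + a)).
    { rewrite (rgamma_rec (INR k + a)) by lra. replace (INR k + 1 + a) with (INR k + a + 1) by ring.
      field. lra. }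
    assert (E2 : rgamma (INR k + 1 + b) = rgamma (INR k + b) / (INR k + b)).
    { rewrite (rgamma_rec (INR k + b)) by lra. replace (INR k + 1 + b) with (INR k + b + 1) by ring.
      field. lra. }
    rewrite E1, E2. simpl. field. split; lra. }
  assert (Ht1 : ttilde mu nu x = Rpower y (mu + 1) * Series Q).
  { unfold ttilde. rewrite <- Series_scal_l. apply Series_ext. intros k.
    fold y a b. replace (mu + 2 * INR k + 1) with ((mu + 1) + 2 * INR k) by ring.
    rewrite Rpow_split by auto. fold z. unfold Q. ring. }
  assert (Ht2 : ttilde (mu - 1) (nu - 1) x = Rpower y mu * Series (fun k => (INR k + b - 1) * Q k)).
  { unfold ttilde. rewrite <- Series_scal_l. apply Series_ext. intros k.
    pose proof (INR_pos k). fold y.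
    replace (mu - 1 + 2 * INR k + 1) with (mu + 2 * INR k) by ring.
    replace ((mu - 1 - (nu - 1) + 3) / 2) with a by (unfold a; field).
    replace (INR k + (mu - 1 + (nu - 1) + 3) / 2) with (INR k + b - 1) by (unfold b; field).
    rewrite (rgamma_rec (INR k + b - 1)) by lra.
    replace (INR k + b - 1 + 1) with (INR k + b) by ring.
    rewrite Rpow_split by auto. fold z. unfold Q. ring. }
  assert (Ht3 : ttilde (mu + 1) (nu + 1) x = Rpower y (mu + 2) * Series (fun k => Q k / (INR k + b))).
  { unfold ttilde. rewrite <- Series_scal_l. apply Series_ext. intros k.
    pose proof (INR_pos k). fold y.
    replace (mu + 1 + 2 * INR k + 1) with ((mu + 2) + 2 * INR k) by ring.
    replace ((mu + 1 - (nu + 1) + 3) / 2) with a by (unfold a; field).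
    replace (INR k + (mu + 1 + (nu + 1) + 3) / 2) with (INR k + b + 1) by (unfold b; field).
    assert (E2 : rgamma (INR k + b + 1) = rgamma (INR k + b) / (INR k + b)).
    { rewrite (rgamma_rec (INR k + b)) by lra. field. lra. }
    rewrite E2.
    rewrite Rpow_split by auto. fold z. unfold Q. field. lra. }
  assert (HP1 : Rpower y (mu + 1) ^ 2 = Rpower y (2 * mu + 2)).
  { simpl. rewrite Rmult_1_r, <- Rpower_plus. f_equal. ring. }
  assert (HP2 : Rpower y mu * Rpower y (mu + 2) = Rpower y (2 * mu + 2)).
  { rewrite <- Rpower_plus. f_equal. ring. }
  assert (HPp : 0 < Rpower y (2 * mu + 2)) by (unfold Rpower; apply exp_pos).
  assert (HD : LommelDelta mu nu x = Rpower y (2 * mu + 2) *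
     (Series Q * Series Q - Series (fun k => (INR k + b - 1) * Q k) * Series (fun k => Q k / (INR k + b)))).
  { unfold LommelDelta. fold y. rewrite Ht1, Ht2, Ht3. rewrite Rpow_mult_distr, HP1, <- HP2. ring. }
  destruct (Gamma_is a Ha) as [_ Hga]. destruct (Gamma_is b Hb) as [_ Hgb].
  assert (HQ0 : Q 0%nat = / Gamma a * / Gamma b).
  { unfold Q. simpl. rewrite !Rplus_0_l. rewrite !rgamma_pos_eq by auto. ring. }
  assert (HL : 2 * Rpower y (2 * mu + 2) / ((mu + nu + 3) * (Gamma a * Gamma b) ^ 2)
               = Rpower y (2 * mu + 2) * (Q 0%nat ^ 2 / b)).
  { rewrite HQ0. replace (mu + nu + 3) with (2 * b) by (unfold b; field). field. repeat split; lra. }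
  destruct (core a b z Q Ha Hb Hz HQp HQ) as [C1 C2].
  fold a b y. rewrite HL, HD.
  split; [|split].
  - apply Rmult_lt_0_compat; auto. apply Rdiv_lt_0_compat; auto. apply pow_lt. auto.
  - apply Rmult_le_compat_l; lra.
  - rewrite Ht1.
    replace (2 * (Rpower y (mu + 1) * Series Q) ^ 2 / (mu + nu + 3))
      with (Rpower y (2 * mu + 2) * (Series Q * Series Q / b))
      by (rewrite <- HP1; replace (mu + nu + 3) with (2 * b) by (unfold b; field); field; lra).
    apply Rmult_le_compat_l; lra.
Qed.
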